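(* Let $0<\delta<\frac12$, let $f\in\mathrm{Diff}_+^{1,\delta}(I)$, and let $G\subseteq\mathrm{Diff}_0^3(I)$ satisfy condition (a): there exists $c>0$ such that for all $g_1\ne g_2$ in $G$, $\sup_{t\in[0,1]}|\log(g_1'(t))-\log(g_2'(t))|\ge c$. Then for every $C>0$ the set $\{g\in G: p_\delta(g\circ f)\le C\}$ is finite.
   Context: $I=[0,1]$. $\mathrm{Diff}_+^1(I)$ is the set of $C^1$ diffeomorphisms of $I$ fixing $0$ and $1$; $\mathrm{Diff}_+^{1,\delta}(I)$ is the set of $f\in\mathrm{Diff}_+^1(I)$ with $f'$ Hölder of exponent $\delta$. $\mathrm{Diff}_0^3(I)$ is the set of $C^3$ diffeomorphisms $f$ of $I$ fixing $0$ and $1$ with $f'(0)=f'(1)=1$. For $f\in\mathrm{Diff}_+^{1,\delta}(I)$, $p_\delta(f)=|\log(f'(0))|+\sup_{t_1\ne t_2\in I}\frac{|\log(f'(t_2))-\log(f'(t_1))|}{|t_2-t_1|^\delta}$. *)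

(* Defs.v *)
From Stdlib Require Import Reals ClassicalEpsilon List.
From Coquelicot Require Import Coquelicot.
Open Scope R_scope.

Definition inI (t : R) : Prop := 0 <= t <= 1.

Definition has_derI (f : R -> R) (t l : R) : Prop :=
  forall eps : R, 0 < eps -> exists delta : R, 0 < delta /\
    forall s : R, inI s -> s <> t -> Rabs (s - t) < delta ->
      Rabs ((f s - f t) / (s - t) - l) < eps.

(* the derivative within I (the value is unique when it exists, since I has no
   isolated points); arbitrary where it does not exist *)
Definition derI (f : R -> R) (t : R) : R :=
  epsilon (inhabits 0) (fun l => has_derI f t l).

Definition differentiableI (f : R -> R) : Prop :=
  forall t, inI t -> exists l, has_derI f t l.

Definition continuousI (f : R -> R) : Prop :=
  forall t, inI t -> forall eps : R, 0 < eps -> exists delta : R, 0 < delta /\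
    forall s : R, inI s -> Rabs (s - t) < delta -> Rabs (f s - f t) < eps.

(* Diff^1_+(I): C^1 diffeomorphisms of I fixing 0 and 1 (orientation preserving:
   f' > 0 on I, which together with f 0 = 0, f 1 = 1 makes f a C^1 diffeo of I) *)
Definition Diff1 (f : R -> R) : Prop :=
  f 0 = 0 /\ f 1 = 1 /\ differentiableI f /\ continuousI (derI f) /\
  (forall t, inI t -> 0 < derI f t).

Definition Diff1delta (delta : R) (f : R -> R) : Prop :=
  Diff1 f /\ exists K : R, forall t1 t2, inI t1 -> inI t2 -> t1 <> t2 ->
    Rabs (derI f t2 - derI f t1) <= K * Rpower (Rabs (t2 - t1)) delta.

Definition Diff3_0 (f : R -> R) : Prop :=
  Diff1 f /\ differentiableI (derI f) /\ differentiableI (derI (derI f)) /\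
  continuousI (derI (derI (derI f))) /\
  derI f 0 = 1 /\ derI f 1 = 1.

Definition p_delta (delta : R) (f : R -> R) : Rbar :=
  Rbar_plus (Finite (Rabs (ln (derI f 0))))
    (Lub_Rbar (fun x => exists t1 t2, inI t1 /\ inI t2 /\ t1 <> t2 /\
       x = Rabs (ln (derI f t2) - ln (derI f t1)) / Rpower (Rabs (t2 - t1)) delta)).

Definition condition_a (G : (R -> R) -> Prop) : Prop :=
  exists c : R, 0 < c /\ forall g1 g2, G g1 -> G g2 -> g1 <> g2 ->
    Rbar_le (Finite c)
      (Lub_Rbar (fun x => exists t, inI t /\
         x = Rabs (ln (derI g1 t) - ln (derI g2 t)))).

Definition finite_set {T : Type} (A : T -> Prop) : Prop :=
  exists l : list T, forall x, A x -> In x l.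

(* Main.v *)
Require Import Defs.
From Stdlib Require Import Reals ClassicalEpsilon List Lra Lia.
From Coquelicot Require Import Coquelicot.
Open Scope R_scope.

Lemma der_unique h t l1 l2 : inI t -> has_derI h t l1 -> has_derI h t l2 -> l1 = l2.
Proof.
  intros Ht H1 H2.
  destruct (Req_dec l1 l2) as [|Hne]; [auto|exfalso].
  assert (He : 0 < Rabs (l1 - l2) / 2) by (assert (0 < Rabs (l1 - l2)) by (apply Rabs_pos_lt; lra); lra).
  destruct (H1 _ He) as [d1 [Hd1 P1]]. destruct (H2 _ He) as [d2 [Hd2 P2]].
  set (d := Rmin (Rmin d1 d2) 1 / 2).
  assert (Hd : 0 < d /\ d < d1 /\ d < d2 /\ d <= 1/2).
  { unfold d. pose proof (Rmin_l (Rmin d1 d2) 1). pose proof (Rmin_r (Rmin d1 d2) 1).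
    pose proof (Rmin_l d1 d2). pose proof (Rmin_r d1 d2).
    assert (0 < Rmin (Rmin d1 d2) 1) by (repeat apply Rmin_glb_lt; lra). lra. }
  destruct Ht as [Ht0 Ht1].
  set (s := if Rle_dec t (1/2) then t + d else t - d).
  assert (Hs : inI s /\ s <> t /\ Rabs (s - t) = d).
  { unfold s; destruct (Rle_dec t (1/2)); repeat split; try lra.
    - replace (t + d - t) with d by ring. apply Rabs_pos_eq; lra.
    - replace (t - d - t) with (- d) by ring. rewrite Rabs_Ropp. apply Rabs_pos_eq; lra. }
  destruct Hs as [HsI [Hst Hsd]].
  specialize (P1 s HsI Hst ltac:(lra)). specialize (P2 s HsI Hst ltac:(lra)).
  set (q := (h s - h t) / (s - t)) in *.
  assert (Rabs (l1 - l2) <= Rabs (q - l1) + Rabs (q - l2)).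
  { replace (l1 - l2) with (- (q - l1) + (q - l2)) by ring.
    eapply Rle_trans; [apply Rabs_triang|]. rewrite Rabs_Ropp. lra. }
  lra.
Qed.

Lemma derI_eq h t l : inI t -> has_derI h t l -> derI h t = l.
Proof.
  intros Ht H. unfold derI.
  apply (der_unique h t); auto.
  apply (epsilon_spec (inhabits 0) (fun l => has_derI h t l)). eauto.
Qed.

Lemma derI_has h t : differentiableI h -> inI t -> has_derI h t (derI h t).
Proof.
  intros D Ht. destruct (D t Ht) as [l Hl]. rewrite (derI_eq h t l); auto.
Qed.

Lemma der_lip h t l : has_derI h t l -> exists d, 0 < d /\ forall s, inI s -> Rabs (s - t) < d ->
  Rabs (h s - h t) <= (Rabs l + 1) * Rabs (s - t).
Proof.
  intros H. destruct (H 1 Rlt_0_1) as [d [Hd P]]. exists d; split; auto.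
  intros s Hs Hsd. destruct (Req_dec s t) as [->|Hne].
  - rewrite !Rminus_diag, Rabs_R0. lra.
  - specialize (P s Hs Hne Hsd).
    replace (h s - h t) with (((h s - h t) / (s - t)) * (s - t)) by (field; lra).
    rewrite Rabs_mult. apply Rmult_le_compat_r; [apply Rabs_pos|].
    set (q := (h s - h t) / (s - t)) in *.
    replace q with ((q - l) + l) by ring.
    eapply Rle_trans; [apply Rabs_triang|]. lra.
Qed.

Lemma differentiable_continuous h : differentiableI h -> continuousI h.
Proof.
  intros D t Ht eps Heps. destruct (D t Ht) as [l Hl].
  destruct (der_lip h t l Hl) as [d [Hd P]].
  assert (Hl1 : 0 < Rabs l + 1) by (pose proof (Rabs_pos l); lra).
  exists (Rmin d (eps / (Rabs l + 1))). split.
  - apply Rmin_glb_lt; auto. apply Rdiv_lt_0_compat; lra.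
  - intros s Hs Hsd. pose proof (Rmin_l d (eps / (Rabs l + 1))). pose proof (Rmin_r d (eps / (Rabs l + 1))).
    eapply Rle_lt_trans; [apply P; auto; lra|].
    apply (Rmult_lt_reg_l (/ (Rabs l + 1))); [apply Rinv_0_lt_compat; lra|].
    replace (/ (Rabs l + 1) * ((Rabs l + 1) * Rabs (s - t))) with (Rabs (s - t)) by (field; lra).
    replace (/ (Rabs l + 1) * eps) with (eps / (Rabs l + 1)) by (field; lra). lra.
Qed.

Definition clamp (x : R) : R := Rmax 0 (Rmin 1 x).

Lemma clamp_I x : inI (clamp x).
Proof. unfold clamp, inI. split; [apply Rmax_l|]. apply Rmax_lub; [lra|apply Rmin_l]. Qed.

Lemma clamp_id x : inI x -> clamp x = x.
Proof. intros [H0 H1]. unfold clamp. rewrite Rmin_right by lra. rewrite Rmax_right; lra. Qed.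

Lemma clamp_lip x y : Rabs (clamp x - clamp y) <= Rabs (x - y).
Proof.
  unfold clamp. unfold Rmax, Rmin.
  repeat (destruct Rle_dec); unfold Rabs; repeat destruct Rcase_abs; lra.
Qed.

Lemma clamp_cont h : continuousI h -> continuity (fun x => h (clamp x)).
Proof.
  intros Hc x. unfold continuity_pt, continue_in, limit1_in, limit_in.
  intros eps Heps. destruct (Hc (clamp x) (clamp_I x) eps Heps) as [d [Hd P]].
  exists d. split; auto. intros y [_ Hy]. simpl in *. unfold R_dist in *.
  apply P; [apply clamp_I|]. eapply Rle_lt_trans; [apply clamp_lip|]. auto.
Qed.

Lemma pos_right h t b : inI t -> t < 1 -> has_derI h t b -> 0 < b ->
  exists s, inI s /\ h t < h s.
Proof.
  intros [H0 H1] Ht1 Hd Hb. destruct (Hd (b/2) ltac:(lra)) as [d [Hdp P]].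
  set (s := t + Rmin (d/2) ((1 - t)/2)).
  pose proof (Rmin_l (d/2) ((1 - t)/2)). pose proof (Rmin_r (d/2) ((1 - t)/2)).
  assert (0 < Rmin (d/2) ((1 - t)/2)) by (apply Rmin_glb_lt; lra).
  assert (HsI : inI s) by (unfold inI, s; lra).
  exists s; split; auto.
  assert (Hst : s - t > 0) by (unfold s; lra).
  specialize (P s HsI ltac:(lra) ltac:(rewrite Rabs_pos_eq; unfold s in *; lra)).
  apply Rabs_lt_between in P.
  assert (0 < (h s - h t) / (s - t)) by lra.
  assert (0 < (h s - h t)).
  { replace (h s - h t) with ((h s - h t) / (s - t) * (s - t)) by (field; lra). nra. }
  lra.
Qed.

Lemma pos_left h t b : inI t -> 0 < t -> has_derI h t b -> 0 < b ->
  exists s, inI s /\ h s < h t.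
Proof.
  intros [H0 H1] Ht1 Hd Hb. destruct (Hd (b/2) ltac:(lra)) as [d [Hdp P]].
  set (s := t - Rmin (d/2) (t/2)).
  pose proof (Rmin_l (d/2) (t/2)). pose proof (Rmin_r (d/2) (t/2)).
  assert (0 < Rmin (d/2) (t/2)) by (apply Rmin_glb_lt; lra).
  assert (HsI : inI s) by (unfold inI, s; lra).
  exists s; split; auto.
  assert (Hst : s - t < 0) by (unfold s; lra).
  specialize (P s HsI ltac:(lra) ltac:(rewrite Rabs_left; unfold s in *; lra)).
  apply Rabs_lt_between in P.
  assert (0 < (h s - h t) / (s - t)) by lra.
  assert (h s - h t < 0).
  { replace (h s - h t) with ((h s - h t) / (s - t) * (s - t)) by (field; lra). nra. }
  lra.
Qed.

Lemma Diff1_maps f : Diff1 f -> forall t, inI t -> inI (f t).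
Proof.
  intros [F0 [F1 [FD [FC FP]]]].
  pose proof (clamp_cont f (differentiable_continuous f FD)) as Cf.
  assert (Hc : forall c, 0 <= c <= 1 -> continuity_pt (fun x => f (clamp x)) c) by (intros; apply Cf).
  destruct (continuity_ab_maj _ 0 1 ltac:(lra) Hc) as [Mx [HM HMI]].
  destruct (continuity_ab_min _ 0 1 ltac:(lra) Hc) as [mx [Hm HmI]].
  rewrite clamp_id in HM, Hm by exact HMI || exact HmI.
  assert (EM : Mx = 1).
  { destruct (Req_dec Mx 1) as [|Hne]; auto. exfalso.
    destruct (pos_right f Mx (derI f Mx) HMI ltac:(lra) (derI_has f Mx FD HMI) (FP Mx HMI)) as [s [Hs Hlt]].
    specialize (HM s Hs). rewrite clamp_id in HM by auto. lra. }
  assert (Em : mx = 0).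
  { destruct (Req_dec mx 0) as [|Hne]; auto. exfalso.
    destruct (pos_left f mx (derI f mx) HmI ltac:(lra) (derI_has f mx FD HmI) (FP mx HmI)) as [s [Hs Hlt]].
    specialize (Hm s Hs). rewrite clamp_id in Hm by auto. lra. }
  subst. intros t Ht. specialize (HM t Ht). specialize (Hm t Ht).
  rewrite clamp_id in HM, Hm by auto. unfold inI; lra.
Qed.

Lemma Diff1_onto f : Diff1 f -> forall u, inI u -> exists t, inI t /\ f t = u.
Proof.
  intros Df u Hu. pose proof Df as [F0 [F1 [FD [FC FP]]]].
  pose proof (clamp_cont f (differentiable_continuous f FD)) as Cf.
  assert (C2 : continuity (fun x => f (clamp x) - u)) by (apply continuity_minus; [auto|apply continuity_const; intros ? ?; auto]).
  destruct (IVT_cor _ 0 1 C2 ltac:(lra)) as [z [Hz Ez]].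
  - rewrite !clamp_id by (unfold inI; lra). rewrite F0, F1. destruct Hu; nra.
  - exists z. rewrite clamp_id in Ez by auto. split; auto. lra.
Qed.

Lemma Diff1_min f : Diff1 f -> exists m, 0 < m /\ forall t, inI t -> m <= derI f t.
Proof.
  intros [F0 [F1 [FD [FC FP]]]].
  pose proof (clamp_cont _ FC) as Cf.
  assert (Hc : forall c, 0 <= c <= 1 -> continuity_pt (fun x => derI f (clamp x)) c) by (intros; apply Cf).
  destruct (continuity_ab_min _ 0 1 ltac:(lra) Hc) as [mx [Hm HmI]].
  exists (derI f (clamp mx)). split.
  - apply FP, clamp_I.
  - intros t Ht. specialize (Hm t Ht). rewrite (clamp_id t Ht) in Hm. auto.
Qed.

Lemma chain g f t a b : inI t -> (forall s, inI s -> inI (f s)) ->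
  has_derI g (f t) a -> has_derI f t b -> has_derI (fun s => g (f s)) t (a * b).
Proof.
  intros Ht Hf Hg Hfd eps Heps.
  set (A := Rabs a). set (Bb := Rabs b).
  assert (HA : 0 <= A) by apply Rabs_pos. assert (HB : 0 <= Bb) by apply Rabs_pos.
  set (e1 := Rmin 1 (eps / (2 * (A + 1)))).
  assert (He1 : 0 < e1 /\ e1 <= 1 /\ A * e1 < eps / 2).
  { unfold e1. pose proof (Rmin_l 1 (eps / (2 * (A + 1)))). pose proof (Rmin_r 1 (eps / (2 * (A + 1)))).
    assert (0 < eps / (2 * (A + 1))) by (apply Rdiv_lt_0_compat; lra).
    split; [apply Rmin_glb_lt; lra|]. split; [auto|].
    apply Rle_lt_trans with (A * (eps / (2 * (A + 1)))); [apply Rmult_le_compat_l; auto|].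
    apply (Rmult_lt_reg_l (2 * (A + 1))); [lra|].
    replace (2 * (A + 1) * (A * (eps / (2 * (A + 1))))) with (A * eps) by (field; lra). nra. }
  set (e2 := eps / (2 * (Bb + 2))).
  assert (He2 : 0 < e2 /\ e2 * (Bb + 1) < eps / 2).
  { unfold e2. split; [apply Rdiv_lt_0_compat; lra|].
    apply (Rmult_lt_reg_l (2 * (Bb + 2))); [lra|].
    replace (2 * (Bb + 2) * (eps / (2 * (Bb + 2)) * (Bb + 1))) with (eps * (Bb + 1)) by (field; lra). nra. }
  destruct (Hfd e1 ltac:(lra)) as [df [Hdf Pf]].
  destruct (Hg e2 ltac:(lra)) as [dg [Hdg Pg]].
  destruct (der_lip f t b Hfd) as [dc [Hdc Pc]].
  set (d := Rmin (Rmin df dc) (dg / (Bb + 1))).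
  assert (Hd : 0 < d /\ d <= df /\ d <= dc /\ d * (Bb + 1) <= dg).
  { unfold d. pose proof (Rmin_l (Rmin df dc) (dg / (Bb + 1))). pose proof (Rmin_r (Rmin df dc) (dg / (Bb + 1))).
    pose proof (Rmin_l df dc). pose proof (Rmin_r df dc).
    assert (0 < dg / (Bb + 1)) by (apply Rdiv_lt_0_compat; lra).
    split; [repeat apply Rmin_glb_lt; lra|]. split; [lra|]. split; [lra|].
    apply Rle_trans with (dg / (Bb + 1) * (Bb + 1)); [apply Rmult_le_compat_r; lra|].
    right; field; lra. }
  exists d. split; [lra|].
  intros s Hs Hst Hsd.
  specialize (Pf s Hs Hst ltac:(lra)).
  set (qf := (f s - f t) / (s - t)) in *.
  assert (Hqf : Rabs qf <= Bb + 1).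
  { replace qf with ((qf - b) + b) by ring. eapply Rle_trans; [apply Rabs_triang|]. unfold Bb. lra. }
  destruct (Req_dec (f s) (f t)) as [Efs|Nfs].
  - replace ((g (f s) - g (f t)) / (s - t) - a * b) with (- (a * b)) by (rewrite Efs; field; lra).
    assert (qf = 0) by (unfold qf; rewrite Efs; field; lra).
    rewrite H in Pf. rewrite Rabs_Ropp, Rabs_mult. fold A. fold Bb.
    replace (0 - b) with (- b) in Pf by ring. rewrite Rabs_Ropp in Pf. fold Bb in Pf.
    assert (A * Bb <= A * e1) by (apply Rmult_le_compat_l; lra). lra.
  - assert (Hfs : Rabs (f s - f t) < dg).
    { eapply Rle_lt_trans; [apply Pc; auto; lra|].
      assert (Rabs (s - t) * (Bb + 1) < d * (Bb + 1)) by (apply Rmult_lt_compat_r; lra).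
      fold Bb. lra. }
    specialize (Pg (f s) (Hf s Hs) Nfs Hfs).
    set (qg := (g (f s) - g (f t)) / (f s - f t)) in *.
    replace ((g (f s) - g (f t)) / (s - t) - a * b) with ((qg - a) * qf + a * (qf - b))
      by (unfold qg, qf; field; split; lra).
    eapply Rle_lt_trans; [apply Rabs_triang|]. rewrite !Rabs_mult. fold A.
    assert (Rabs (qg - a) * Rabs qf <= e2 * (Bb + 1)) by (apply Rmult_le_compat; try apply Rabs_pos; lra).
    assert (A * Rabs (qf - b) <= A * e1) by (apply Rmult_le_compat_l; lra).
    lra.
Qed.

Lemma ln_lip m x y : 0 < m -> m <= x -> m <= y -> Rabs (ln x - ln y) <= Rabs (x - y) / m.
Proof.
  intros Hm.
  assert (K : forall x y, m <= y -> y <= x -> ln x - ln y <= (x - y) / m).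
  { intros u v Hv Huv. rewrite <- ln_div by lra.
    pose proof (exp_ineq1_le (ln (u / v))). rewrite exp_ln in H by (apply Rdiv_lt_0_compat; lra).
    apply Rle_trans with (u / v - 1); [lra|].
    replace (u / v - 1) with ((u - v) / v) by (field; lra).
    unfold Rdiv. apply Rmult_le_compat_l; [lra|]. apply Rinv_le_contravar; lra. }
  intros Hx Hy. destruct (Rle_dec y x) as [Hyx|Hxy].
  - assert (ln y <= ln x) by (apply ln_le; lra).
    rewrite !Rabs_pos_eq; [apply K; auto| lra | lra].
  - rewrite Rabs_minus_sym, (Rabs_minus_sym x y).
    assert (ln x <= ln y) by (apply ln_le; lra).
    rewrite !Rabs_pos_eq; [apply K; auto; lra| lra | lra].
Qed.

Lemma pdelta_bound delta h C : Rbar_le (p_delta delta h) (Finite C) ->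
  forall t1 t2, inI t1 -> inI t2 -> t1 <> t2 ->
  Rabs (ln (derI h t2) - ln (derI h t1)) / Rpower (Rabs (t2 - t1)) delta <= C.
Proof.
  intros H t1 t2 H1 H2 H12. unfold p_delta in H.
  destruct (Lub_Rbar_correct (fun x => exists t1 t2, inI t1 /\ inI t2 /\ t1 <> t2 /\
       x = Rabs (ln (derI h t2) - ln (derI h t1)) / Rpower (Rabs (t2 - t1)) delta)) as [ub _].
  set (L := Lub_Rbar _) in *.
  set (x := Rabs (ln (derI h t2) - ln (derI h t1)) / Rpower (Rabs (t2 - t1)) delta).
  assert (Hx : Rbar_le x L) by (apply ub; exists t1, t2; auto).
  pose proof (Rabs_pos (ln (derI h 0))).
  destruct L as [r| |]; simpl in *; try tauto. lra.
Qed.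

Lemma Rpower_pos x y : 0 < Rpower x y.
Proof. unfold Rpower. apply exp_pos. Qed.

Lemma Rpower_le1 x d : 0 < x <= 1 -> 0 <= d -> Rpower x d <= 1.
Proof.
  intros Hx Hd. assert (E : Rpower 1 d = 1) by (unfold Rpower; rewrite ln_1, Rmult_0_r; apply exp_0).
  rewrite <- E. apply Rle_Rpower_l; lra.
Qed.

Lemma Rpower_inv y d : 0 < y -> 0 < d -> Rpower (Rpower y (1/d)) d = y.
Proof.
  intros. rewrite Rpower_mult. replace (1 / d * d) with 1 by (field; lra). apply Rpower_1; auto.
Qed.
Fixpoint allcodes (Rg : list Z) (n : nat) : list (list Z) :=
  match n with
  | O => nil :: nil
  | S n => flat_map (fun z => map (cons z) (allcodes Rg n)) Rg
  end.

Lemma allcodes_in Rg : forall n l, length l = n -> (forall z, In z l -> In z Rg) ->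
  In l (allcodes Rg n).
Proof.
  induction n as [|n IH]; intros l Hl Hz.
  - destruct l; simpl in *; [auto|discriminate].
  - destruct l as [|z l]; simpl in *; [discriminate|].
    apply in_flat_map. exists z. split; [apply Hz; auto|].
    apply in_map. apply IH; [lia|]. intros; apply Hz; auto.
Qed.

Definition Zrange (M : Z) : list Z :=
  map (fun i => (Z.of_nat i - M)%Z) (seq 0 (Z.to_nat (2*M+1))).

Lemma Zrange_in M z : (-M <= z <= M)%Z -> In z (Zrange M).
Proof.
  intros H. unfold Zrange. apply in_map_iff. exists (Z.to_nat (z + M)).
  split; [lia|]. apply in_seq. lia.
Qed.

Lemma finite_inj {T : Type} (S : T -> Prop) (t0 : T) (code : T -> list Z) (L : list (list Z)) :
  (forall x, S x -> In (code x) L) ->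
  (forall x y, S x -> S y -> code x = code y -> x = y) ->
  finite_set S.
Proof.
  intros HL Hinj.
  exists (map (fun c => epsilon (inhabits t0) (fun x => S x /\ code x = c)) L).
  intros x Sx. apply in_map_iff. exists (code x). split; [|auto].
  assert (H : exists y, S y /\ code y = code x) by eauto.
  destruct (epsilon_spec (inhabits t0) (fun y => S y /\ code y = code x) H) as [H1 H2].
  apply Hinj; auto.
Qed.

Lemma up_close x y : up x = up y -> Rabs (x - y) < 1.
Proof.
  intros E. destruct (archimed x) as [a b]. destruct (archimed y) as [c d].
  rewrite E in a, b. apply Rabs_def1; lra.
Qed.

Lemma up_bound x M : Rabs x <= IZR M -> (- M <= up x <= M + 1)%Z.
Proof.
  intros H. destruct (archimed x) as [a b]. apply Rabs_le_between in H.
  split.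
  - assert (IZR (- M) < IZR (up x)) by (rewrite opp_IZR; lra).
    apply lt_IZR in H0. lia.
  - apply le_IZR. rewrite plus_IZR. lra.
Qed.

Lemma map_eq_in {A B : Type} (f g : A -> B) l : map f l = map g l -> forall a, In a l -> f a = g a.
Proof.
  induction l as [|x l IH]; simpl; intros E a Ha; [tauto|].
  injection E as E1 E2. destruct Ha as [<-|Ha]; auto.
Qed.

Lemma equi_finite (P : (R->R)->Prop) (phi : (R->R)->R->R) (eps B eta : R) :
 0<eps -> 0<eta ->
 (forall g, P g -> forall t s, inI t -> inI s -> Rabs (t-s) < eta -> Rabs (phi g t - phi g s) <= eps) ->
 (forall g, P g -> forall t, inI t -> Rabs (phi g t) <= B) ->
 (forall g1 g2, P g1 -> P g2 -> g1 <> g2 -> exists t, inI t /\ 3*eps < Rabs (phi g1 t - phi g2 t)) ->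
 finite_set P.
Proof.
  intros Heps Heta Heq Hb Hsep.
  destruct (archimed (1/eta)) as [HN1 HN2].
  set (zN := up (1/eta)) in *.
  assert (Hpos: 0 < 1/eta) by (apply Rdiv_lt_0_compat; lra).
  set (N := Z.to_nat zN).
  assert (HzN : (1 <= zN)%Z) by (assert (H0z : IZR 0 < IZR zN) by (change (IZR 0) with 0; lra); apply lt_IZR in H0z; lia).
  assert (HINR : INR N = IZR zN) by (unfold N; rewrite INR_IZR_INZ, Znat.Z2Nat.id; [reflexivity|lia]).
  assert (HNpos : 0 < INR N) by (rewrite HINR; lra).
  assert (HNeta : 1 / INR N < eta).
  { rewrite HINR. apply (Rmult_lt_reg_l (IZR zN)); [lra|].
    replace (IZR zN * (1 / IZR zN)) with 1 by (field; lra).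
    apply (Rmult_lt_reg_l (/eta)); [apply Rinv_0_lt_compat; lra|].
    replace (/ eta * (IZR zN * eta)) with (IZR zN) by (field; lra). lra. }
  destruct (archimed (B/eps)) as [HM1 HM2].
  set (Mz := up (B/eps)) in *.
  set (code := fun g => map (fun k => up (phi g (INR k / INR N) / eps)) (seq 0 (S N))).
  apply (finite_inj P (fun _ => 0) code (allcodes (Zrange (Mz+2)) (S N))).
  - intros g Sg. apply allcodes_in.
    + unfold code. rewrite length_map, length_seq. reflexivity.
    + intros z Hz. unfold code in Hz. apply in_map_iff in Hz as [k [<- Hk]].
      apply in_seq in Hk. apply Zrange_in.
      assert (Hk' : inI (INR k / INR N)).
      { assert (0 <= INR k) by apply pos_INR.
        assert (INR k <= INR N) by (apply le_INR; lia).
        split; [apply Rdiv_le_0_compat; lra|].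
        apply (Rmult_le_reg_l (INR N)); [lra|]. field_simplify; lra. }
      assert (Hbb : Rabs (phi g (INR k / INR N) / eps) <= IZR (Mz + 1)).
      { unfold Rdiv at 1. rewrite Rabs_mult, Rabs_inv, (Rabs_pos_eq eps) by lra.
        rewrite plus_IZR. specialize (Hb g Sg _ Hk').
        apply (Rmult_le_reg_l eps); [lra|].
        replace (eps * (Rabs (phi g (INR k / INR N)) * / eps)) with (Rabs (phi g (INR k / INR N))) by (field; lra).
        assert (B <= eps * IZR Mz).
        { replace B with (eps * (B/eps)) by (field; lra). apply Rmult_le_compat_l; lra. }
        lra. }
      apply up_bound in Hbb. lia.
  - intros x y Sx Sy E.
    destruct (Classical_Prop.classic (x = y)) as [|Hne]; [auto|exfalso].
    destruct (Hsep x y Sx Sy Hne) as [t [Ht Hgt]].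
    destruct (archimed (t * INR N)) as [Hz1 Hz2].
    set (z := up (t * INR N)) in *.
    assert (HtN : 0 <= t * INR N) by (destruct Ht; nra).
    assert (Hz0 : (1 <= z)%Z) by (assert (IZR 0 < IZR z) by (change (IZR 0) with 0; lra); apply lt_IZR in H; lia).
    set (k := Z.to_nat (z - 1)).
    assert (Hk : INR k = IZR (z - 1)) by (unfold k; rewrite INR_IZR_INZ, Znat.Z2Nat.id; [reflexivity|lia]).
    assert (HkN : (k <= N)%nat).
    { assert (IZR (z - 1) <= IZR zN).
      { rewrite minus_IZR, <- HINR. destruct Ht. nra. }
      apply le_IZR in H. unfold k, N. lia. }
    set (p := INR k / INR N).
    assert (Hp : inI p).
    { assert (0 <= INR k) by apply pos_INR.
      assert (INR k <= INR N) by (apply le_INR; lia).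
      split; [apply Rdiv_le_0_compat; lra|].
      apply (Rmult_le_reg_l (INR N)); [lra|]. unfold p. field_simplify; lra. }
    assert (Htp : Rabs (t - p) < eta).
    { apply Rle_lt_trans with (1 / INR N); [|auto].
      unfold p. rewrite Hk, minus_IZR.
      apply Rabs_le. split; apply (Rmult_le_reg_l (INR N)); try lra; field_simplify; try lra;
        unfold z in *; lra. }
    assert (Hc : up (phi x p / eps) = up (phi y p / eps)).
    { apply (map_eq_in _ _ _ E). apply in_seq. lia. }
    apply up_close in Hc.
    assert (Hd : Rabs (phi x p - phi y p) < eps).
    { replace (phi x p - phi y p) with (eps * (phi x p / eps - phi y p / eps)) by (field; lra).
      rewrite Rabs_mult, (Rabs_pos_eq eps) by lra. nra. }
    pose proof (Heq x Sx t p Ht Hp Htp) as Ex. pose proof (Heq y Sy t p Ht Hp Htp) as Ey.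
    rewrite Rabs_minus_sym in Ey.
    assert (Tr : Rabs (phi x t - phi y t) <= Rabs (phi x t - phi x p) + Rabs (phi x p - phi y p) + Rabs (phi y p - phi y t)).
    { replace (phi x t - phi y t) with ((phi x t - phi x p) + (phi x p - phi y p) + (phi y p - phi y t)) by ring.
      eapply Rle_trans; [apply Rabs_triang|]. apply Rplus_le_compat_r. apply Rabs_triang. }
    lra.
Qed.

Theorem mainTheorem15 (delta : R) (f : R -> R) (G : (R -> R) -> Prop) :
  0 < delta < 1/2 ->
  Diff1delta delta f ->
  (forall g, G g -> Diff3_0 g) ->
  condition_a G ->
  forall C : R, 0 < C ->
    finite_set (fun g => G g /\ Rbar_le (p_delta delta (fun t => g (f t))) (Finite C)).
Proof.
  intros Hd [Df [K HK]] HG [c [Hc Hsep]] C HC.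
  pose proof (Diff1_maps f Df) as Fm.
  destruct (Diff1_min f Df) as [m [Hm Hmf]].
  pose proof Df as [F0 [F1 [FD [FC FP]]]].
  set (L := C + Rabs K / m).
  assert (HL : 0 < L) by (unfold L; assert (0 <= Rabs K / m) by (apply Rdiv_le_0_compat; [apply Rabs_pos|lra]); lra).
  set (phi := fun (g : R -> R) t => ln (derI g (f t))).
  set (eps := c / 6).
  assert (Hold : forall g, G g /\ Rbar_le (p_delta delta (fun t => g (f t))) (Finite C) ->
    forall t s, inI t -> inI s -> t <> s -> Rabs (phi g t - phi g s) <= L * Rpower (Rabs (t - s)) delta).
  { intros g [Gg Hp] t s Ht Hs Hts.
    destruct (HG g Gg) as [[_ [_ [GD [_ GP]]]] _].
    assert (DE : forall x, inI x -> derI (fun y => g (f y)) x = derI g (f x) * derI f x).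
    { intros x Hx. apply derI_eq; auto. apply chain; auto; apply derI_has; auto. }
    assert (LE : forall x, inI x -> ln (derI (fun y => g (f y)) x) = phi g x + ln (derI f x)).
    { intros x Hx. rewrite DE by auto. unfold phi. apply ln_mult; [apply GP, Fm|apply FP]; auto. }
    pose proof (pdelta_bound delta _ C Hp s t Hs Ht (fun e => Hts (eq_sym e))) as P1.
    rewrite !LE in P1 by auto.
    pose proof (Rpower_pos (Rabs (t - s)) delta) as Rp.
    set (Rw := Rpower (Rabs (t - s)) delta) in *.
    assert (P2 : Rabs (phi g t + ln (derI f t) - (phi g s + ln (derI f s))) <= C * Rw).
    { apply (Rmult_le_compat_r Rw) in P1; [|lra].
      unfold Rdiv in P1. rewrite Rmult_assoc, Rinv_l, Rmult_1_r in P1 by lra. exact P1. }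
    assert (P3 : Rabs (ln (derI f t) - ln (derI f s)) <= Rabs K / m * Rw).
    { eapply Rle_trans; [apply (ln_lip m); auto|].
      unfold Rdiv. rewrite (Rmult_comm (Rabs K)), Rmult_assoc. rewrite (Rmult_comm (/m)).
      apply Rmult_le_compat_r; [left; apply Rinv_0_lt_compat; lra|].
      eapply Rle_trans; [apply (HK s t); auto|]. apply Rmult_le_compat_r; [lra|]. apply RRle_abs. }
    replace (phi g t - phi g s) with ((phi g t + ln (derI f t) - (phi g s + ln (derI f s))) - (ln (derI f t) - ln (derI f s))) by ring.
    eapply Rle_trans; [apply Rabs_triang|]. rewrite Rabs_Ropp. unfold L. lra. }
  apply (equi_finite _ phi eps L (Rpower (eps / L) (1 / delta))).
  - unfold eps; lra.
  - apply Rpower_pos.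
  - intros g Pg t s Ht Hs Hts. destruct (Req_dec t s) as [<-|Hne].
    + rewrite Rminus_diag, Rabs_R0. unfold eps; lra.
    + eapply Rle_trans; [apply Hold; auto|].
      assert (Hepsl : 0 < eps / L) by (apply Rdiv_lt_0_compat; unfold eps; lra).
      apply Rle_trans with (L * (eps / L)); [|right; field; lra].
      apply Rmult_le_compat_l; [lra|].
      rewrite <- (Rpower_inv (eps / L) delta) by lra.
      apply Rle_Rpower_l; [lra|]. split; [apply Rabs_pos_lt; lra|lra].
  - intros g Pg t Ht.
    assert (Z : phi g 0 = 0).
    { unfold phi. rewrite F0. destruct Pg as [Gg _]. destruct (HG g Gg) as [_ [_ [_ [_ [E _]]]]].
      rewrite E. apply ln_1. }
    destruct (Req_dec t 0) as [->|Hne]; [rewrite Z, Rabs_R0; lra|].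
    assert (Ht0 : inI 0) by (unfold inI; lra).
    pose proof (Hold g Pg t 0 Ht Ht0 Hne) as H. rewrite Z, Rminus_0_r, Rminus_0_r in H.
    eapply Rle_trans; [exact H|].
    rewrite <- (Rmult_1_r L) at 2. apply Rmult_le_compat_l; [lra|].
    apply Rpower_le1; [|lra]. split; [apply Rabs_pos_lt; lra|]. destruct Ht. rewrite Rabs_pos_eq; lra.
  - intros g1 g2 [G1 _] [G2 _] Hne. specialize (Hsep g1 g2 G1 G2 Hne).
    destruct (Classical_Prop.classic (exists u, inI u /\ c/2 < Rabs (ln (derI g1 u) - ln (derI g2 u)))) as [[u [Hu Hlt]]|Hno].
    + destruct (Diff1_onto f Df u Hu) as [t [Ht Et]]. exists t. split; auto.
      unfold phi, eps. rewrite Et. lra.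
    + exfalso.
      assert (Ub : Rbar_le (Lub_Rbar (fun x => exists t, inI t /\ x = Rabs (ln (derI g1 t) - ln (derI g2 t)))) (Finite (c/2))).
      { apply (proj2 (Lub_Rbar_correct _)). intros x [u [Hu ->]]. simpl. apply Rnot_lt_le. intro. apply Hno; eauto. }
      pose proof (Rbar_le_trans _ _ _ Hsep Ub). simpl in H. lra.
Qed.
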